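(* Consider Method 2.2 (described in the context) and suppose it does not terminate and the numbers $\varepsilon_k>0$ satisfy $\varepsilon_k\to0$. Then the sequences $\{x_k\},\{\sigma_k\}$ are defined for all $k\in K$ and $\lim_{k\to\infty}f(x_k)=f^*$, $\lim_{k\to\infty}\sigma_k=f^*$.
   Context: Setting: $D\subset\mathbb{R}^n$ closed convex; $f$ convex on $\mathbb{R}^n$ attaining its minimum $f^*$ on $D$; $X^*=\{x\in D:f(x)=f^*\}$; $K=\{0,1,\dots\}$; $\operatorname{epi}(f,\mathbb{R}^n)=\{(x,\gamma):\gamma\ge f(x)\}$; for $Q\subset\mathbb{R}^{n+1}$, $W^1(u,Q)=\{a\in\mathbb{R}^{n+1}:\|a\|=1,\ \langle a,z-u\rangle\le0\ \forall z\in Q\}$; $J=\{1,\dots,m\}$. Method 2.2: fix $x^*\in X^*$; choose $v^j\in\operatorname{int}\operatorname{epi}(f,\mathbb{R}^n)$ ($j\in J$), a closed convex bounded $G_0\subset D$ with $x^*\in G_0$, a closed convex $M_0\subset\mathbb{R}^{n+1}$ with $(x^*,f^* )\in M_0$, numbers $\varepsilon_0>0$, $\bar\gamma_0\le f^*$, a constant $q\ge1$; $i=k=0$. Step 1: $(y_i,\gamma_i)$ solves $\min\{\gamma: x\in G_i,\ (x,\gamma)\in M_i,\ \gamma\ge\bar\gamma_i\}$; if $f(y_i)=\gamma_i$ stop. Step 2: if $f(y_i)-\gamma_i>\varepsilon_k$, choose closed convex $Q_i\subset M_i$ with $(x^*,f^* )\in Q_i$, set $u_i=y_i$ and go to Step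 4. Step 3: choose closed convex $Q_i\ni(x^*,f^* )$; choose $x_k\in G_i$ with $f(x_k)\le f(y_i)$; set $i_k=i$, $\sigma_k=\gamma_{i_k}$, $u_i=x_k$; choose $\varepsilon_{k+1}>0$; $k\leftarrow k+1$. Step 4: for each $j\in J$ choose $z_i^j$ in the open segment $(v^j,(u_i,\gamma_i))$ with $z_i^j\notin\operatorname{int}\operatorname{epi}(f,\mathbb{R}^n)$ such that $(u_i,\gamma_i)+q_i^j(z_i^j-(u_i,\gamma_i))\in\operatorname{epi}(f,\mathbb{R}^n)$ for some $q_i^j\in[1,q]$. Step 5: for $j\in J$ choose nonempty finite $A_i^j\subset W^1(z_i^j,\operatorname{epi}(f,\mathbb{R}^n))$; $M_{i+1}=Q_i\cap\bigcap_{j\in J}\{w\in\mathbb{R}^{n+1}:\langle a,w-z_i^j\rangle\le0\ \forall a\in A_i^j\}$. Step 6: choose closed convex $G_{i+1}\subset G_0$ with $x^*\in G_{i+1}$ and $\bar\gamma_{i+1}\in[\bar\gamma_0,f^*]$; $i\leftarrow i+1$; go to Step 1. *)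

(* Defs.v *)
From HB Require Import structures.
From mathcomp Require Import all_boot all_order all_algebra.
From mathcomp Require Import all_classical all_reals all_analysis.
Set Implicit Arguments. Unset Strict Implicit. Unset Printing Implicit Defensive.
Import Order.TTheory GRing.Theory Num.Theory.
Import numFieldNormedType.Exports.
Local Open Scope classical_set_scope.
Local Open Scope ring_scope.

(* R^n is 'rV[R]_n ; R^{n+1} is represented as 'rV[R]_n * R, a point
   (x, gamma). *)
Section Defs.
Variables (R : realType) (n : nat).
Notation E := 'rV[R]_n.
Notation E1 := ('rV[R]_n * R)%type.

Definition dotE (u v : E) : R := (u *m v^T) 0 0.
Definition dotE1 (a b : E1) : R := dotE a.1 b.1 + a.2 * b.2.
Definition normE1 (a : E1) : R := Num.sqrt (dotE1 a a).

Definition addE1 (a b : E1) : E1 := (a.1 + b.1, a.2 + b.2).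
Definition subE1 (a b : E1) : E1 := (a.1 - b.1, a.2 - b.2).
Definition scaleE1 (t : R) (a : E1) : E1 := (t *: a.1, t * a.2).

Definition convex_setE (A : set E) : Prop :=
  forall x y t, A x -> A y -> 0 <= t <= 1 -> A (t *: x + (1 - t) *: y).
Definition convex_setE1 (A : set E1) : Prop :=
  forall p q t, A p -> A q -> 0 <= t <= 1 ->
    A (addE1 (scaleE1 t p) (scaleE1 (1 - t) q)).
Definition convex_funE (f : E -> R) : Prop :=
  forall x y t, 0 <= t <= 1 ->
    f (t *: x + (1 - t) *: y) <= t * f x + (1 - t) * f y.
Definition bounded_setE (A : set E) : Prop :=
  exists r : R, forall x, A x -> Num.sqrt (dotE x x) <= r.

Definition epi (f : E -> R) : set E1 := [set p | f p.1 <= p.2].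

Definition W1 (u : E1) (Q : set E1) : set E1 :=
  [set a | normE1 a = 1 /\ forall z, Q z -> dotE1 a (subE1 z u) <= 0].

Definition open_segment (v w : E1) : set E1 :=
  [set p | exists t : R, 0 < t < 1 /\ p = addE1 v (scaleE1 t (subE1 w v))].

Definition cut (A : seq E1) (z : E1) : set E1 :=
  [set w | forall a, a \in A -> dotE1 a (subE1 w z) <= 0].

End Defs.

(* A complete infinite run of Method 2.2 that never stops at Step 1.
   Iterations are indexed by i : nat; kk i is the value of the counter k
   when iteration i reaches Step 2.  Iteration i performs Step 3 exactly
   when step3 i holds, i.e. when f(y_i) - gamma_i <= eps_(kk i). *)
Definition method22_run (R : realType) (n m : nat)
  (D : set 'rV[R]_n) (f : 'rV[R]_n -> R) (fstar : R) (xstar : 'rV[R]_n)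
  (v : 'I_m -> ('rV[R]_n * R)) (q : R)
  (G : nat -> set 'rV[R]_n) (M Q : nat -> set ('rV[R]_n * R))
  (bgam : nat -> R) (y : nat -> 'rV[R]_n) (gam : nat -> R)
  (eps : nat -> R) (kk : nat -> nat)
  (x : nat -> 'rV[R]_n) (ik : nat -> nat) (sigma : nat -> R)
  (u : nat -> 'rV[R]_n) (z : nat -> 'I_m -> ('rV[R]_n * R))
  (A : nat -> 'I_m -> seq ('rV[R]_n * R)) : Prop :=
  let step3 i := f (y i) - gam i <= eps (kk i) in
  ((forall j, interior (epi f) (v j)) /\
   (closed (G 0) /\ convex_setE (G 0) /\ bounded_setE (G 0) /\
        G 0 `<=` D /\ G 0 xstar) /\
   (closed (M 0) /\ convex_setE1 (M 0) /\ M 0 (xstar, fstar)) /\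
   bgam 0 <= fstar /\ 1 <= q /\ kk 0 = 0%N)
  /\ forall i : nat,
  (
     (G i (y i) /\ M i (y i, gam i) /\ bgam i <= gam i /\
        (forall x' g', G i x' -> M i (x', g') -> bgam i <= g' -> gam i <= g')) /\
     (closed (Q i) /\ convex_setE1 (Q i) /\ Q i (xstar, fstar)) /\
      (~ step3 i ->
         Q i `<=` M i /\ u i = y i /\ kk i.+1 = kk i) /\
      (step3 i ->
         G i (x (kk i)) /\ f (x (kk i)) <= f (y i) /\ ik (kk i) = i /\
         sigma (kk i) = gam i /\ u i = x (kk i) /\ kk i.+1 = (kk i).+1) /\
      (forall j, open_segment (v j) (u i, gam i) (z i j) /\
         ~ interior (epi f) (z i j) /\
         exists qij : R, 1 <= qij <= q /\
           epi f (addE1 (u i, gam i) (scaleE1 qij (subE1 (z i j) (u i, gam i))))) /\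
      (forall j, A i j != [::] /\ (forall a, a \in A i j -> W1 (z i j) (epi f) a)) /\
        (M i.+1 = Q i `&` [set w | forall j, cut (A i j) (z i j) w]) /\
      closed (G i.+1) /\ convex_setE (G i.+1) /\ G i.+1 `<=` G 0 /\
        G i.+1 xstar /\ bgam 0 <= bgam i.+1 <= fstar).

(* Main.v *)
Require Import Defs.
From HB Require Import structures.
From mathcomp Require Import all_boot all_order all_algebra.
From mathcomp Require Import all_classical all_reals all_analysis.
From mathcomp Require Import ring lra zify.
Import Order.TTheory GRing.Theory Num.Theory.
Import numFieldNormedType.Exports.
Local Open Scope classical_set_scope.
Local Open Scope ring_scope.
Set Implicit Arguments. Unset Strict Implicit.

Section Dot.
Variables (R : realType) (n : nat).
Implicit Types (u w : 'rV[R]_n) (a p r : 'rV[R]_n * R).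

Lemma dotE_sum u w : dotE u w = \sum_k u 0 k * w 0 k.
Proof. by rewrite /dotE mxE; apply: eq_bigr => k _; rewrite mxE. Qed.

Lemma dotEB u w1 w2 : dotE u (w1 - w2) = dotE u w1 - dotE u w2.
Proof. rewrite !dotE_sum -sumrB; apply: eq_bigr => k _; rewrite !mxE; ring. Qed.
Lemma dotED u w1 w2 : dotE u (w1 + w2) = dotE u w1 + dotE u w2.
Proof. rewrite !dotE_sum -big_split; apply: eq_bigr => k _; by rewrite !mxE mulrDr. Qed.
Lemma dotEZ u c w : dotE u (c *: w) = c * dotE u w.
Proof. rewrite !dotE_sum mulr_sumr; apply: eq_bigr => k _; rewrite !mxE; ring. Qed.

Lemma dotE1B a p r : dotE1 a (subE1 p r) = dotE1 a p - dotE1 a r.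
Proof. rewrite /dotE1 /subE1 /= dotEB; ring. Qed.
Lemma dotE1D a p r : dotE1 a (addE1 p r) = dotE1 a p + dotE1 a r.
Proof. rewrite /dotE1 /addE1 /= dotED; ring. Qed.
Lemma dotE1Z a c p : dotE1 a (scaleE1 c p) = c * dotE1 a p.
Proof. rewrite /dotE1 /scaleE1 /= dotEZ; ring. Qed.

Lemma dotE_ge0 u : 0 <= dotE u u.
Proof. rewrite dotE_sum; apply: sumr_ge0 => k _; exact: sqr_ge0. Qed.

Lemma dotE_entry u k : u 0 k ^+ 2 <= dotE u u.
Proof.
rewrite dotE_sum (bigD1 k) //= expr2 lerDl; apply: sumr_ge0 => j _; exact: sqr_ge0.
Qed.

Lemma entry_le_norm u k : `|u 0 k| <= `|u|.
Proof.
rewrite (_ : `|u| = mx_norm u) // mx_normrE.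
by apply/bigmax_geP; right; exists (0, k).
Qed.

Lemma norm_le_entries u c : 0 <= c -> (forall k, `|u 0 k| <= c) -> `|u| <= c.
Proof.
move=> c0 H; rewrite (_ : `|u| = mx_norm u) // mx_normrE.
apply/bigmax_leP; split => // -[i k] _ /=.
by rewrite (ord1 i); apply: H.
Qed.

Lemma norm_le_sqrt u : `|u| <= Num.sqrt (dotE u u).
Proof.
apply: norm_le_entries; first exact: sqrtr_ge0.
move=> k; rewrite -sqrtr_sqr ler_sqrt; [exact: dotE_entry | exact: dotE_ge0].
Qed.

Lemma dotE1_unit a : normE1 a = 1 -> dotE1 a a = 1.
Proof.
rewrite /normE1 => H.
have h0 : 0 <= dotE1 a a.
  rewrite /dotE1; apply: addr_ge0; [exact: dotE_ge0 | rewrite -expr2; exact: sqr_ge0].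
by rewrite -(sqr_sqrtr h0) H expr1n.
Qed.

Lemma unit_entries a : dotE1 a a = 1 -> (forall k, `|a.1 0 k| <= 1) /\ `|a.2| <= 1.
Proof.
rewrite /dotE1 => H.
have h2 : 0 <= a.2 * a.2 by rewrite -expr2; exact: sqr_ge0.
have h1 := dotE_ge0 a.1.
split.
  move=> k; have := dotE_entry a.1 k; rewrite expr2 => hk.
  rewrite ler_norml; apply/andP; split; nra.
rewrite ler_norml; apply/andP; split; nra.
Qed.

Lemma dotE_bound u w : (forall k, `|u 0 k| <= 1) -> `|dotE u w| <= n%:R * `|w|.
Proof.
move=> H; rewrite dotE_sum; apply: le_trans (ler_norm_sum _ _ _) _.
have -> : n%:R * `|w| = \sum_(k < n) `|w| by rewrite sumr_const card_ord mulr_natl.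
apply: ler_sum => k _; rewrite normrM -[X in _ <= X]mul1r.
apply: ler_pM => //. all: try exact: H. all: try exact: entry_le_norm. all: try exact: normr_ge0.
Qed.

Lemma dotE1_bound a d : dotE1 a a = 1 -> `|dotE1 a d| <= n%:R * `|d.1| + `|d.2|.
Proof.
move=> /unit_entries [h1 h2]; rewrite /dotE1.
apply: le_trans (ler_normD _ _) _; apply: lerD; first exact: dotE_bound.
rewrite normrM -[X in _ <= X]mul1r; exact: ler_pM.
Qed.

Lemma unit_norm1 a : dotE1 a a = 1 -> `|a.1| <= 1.
Proof. by move=> /unit_entries [h1 _]; apply: norm_le_entries. Qed.

End Dot.

Section Conv.
Variables (R : realType) (n : nat) (f : 'rV[R]_n -> R).
Hypothesis cf : convex_funE f.

Lemma local_ub (v1 : 'rV[R]_n) (v2 e : R) :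
  (forall b, `|v1 - b| < e -> f b <= v2) ->
  forall ys w, `|ys - w| < e / 2 -> f w <= (f (2%:R *: ys - v1) + v2) / 2%:R.
Proof.
move=> Hb ys w Hw.
have -> : w = (1/2%:R) *: (2%:R *: ys - v1) + (1 - 1/2%:R) *: (2%:R *: w - 2%:R *: ys + v1).
  by apply/rowP => k; rewrite !mxE; field.
have t01 : 0 <= (1/2%:R : R) <= 1 by apply/andP; split; lra.
apply: le_trans (cf (2%:R *: ys - v1) (2%:R *: w - 2%:R *: ys + v1) t01) _.


have hb : f (2%:R *: w - 2%:R *: ys + v1) <= v2.
  apply: Hb.
  have -> : v1 - (2%:R *: w - 2%:R *: ys + v1) = 2%:R *: (ys - w).
    apply/rowP => k; rewrite !mxE; ring.
  rewrite normrZ ger0_norm; last lra.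
  lra.
lra.
Qed.

Lemma gap (v1 : 'rV[R]_n) (v2 rho U ys : R) (ysv : 'rV[R]_n) (g0 fs : R) :
  0 < rho -> (forall w, `|ysv - w| < rho -> f w <= U) ->
  let h := rho / (2%:R * (`|v1 - ysv| + rho + 1)) in
  forall yy gg s eps,
  `|ysv - yy| < rho / 2%:R -> 0 <= s ->
  f (yy + s *: (v1 - yy)) <= gg + s * (v2 - gg) ->
  gg + eps < f yy -> g0 <= gg -> fs <= f yy ->
  h * eps < s * (h * `|v2 - g0| + `|U - fs| + 1).
Proof.
move=> rho0 HU h yy gg s eps Hy s0 Hw Heps Hg0 Hfs.
set B := `|v1 - ysv| + rho + 1.
have B0 : 0 < B by rewrite /B; have := normr_ge0 (v1 - ysv); lra.
have nn := normr_ge0 (v1 - ysv).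
have h0 : 0 < h by rewrite /h; apply: divr_gt0 => //; lra.
have hB : h * B = rho / 2%:R by rewrite /h /B; field; lra.
set y' := yy - h *: (v1 - yy).
have Hy' : f y' <= U.
  apply: HU.
  have -> : ysv - y' = (ysv - yy) + h *: (v1 - yy).
    apply/rowP => k; rewrite !mxE; ring.
  apply: le_lt_trans (ler_normD _ _) _.
  rewrite normrZ (gtr0_norm h0).
  have : `|v1 - yy| <= `|v1 - ysv| + `|ysv - yy|.
    have -> : v1 - yy = (v1 - ysv) + (ysv - yy) by rewrite addrA subrK.
    exact: ler_normD.
  move=> Hn.
  have : h * `|v1 - yy| <= h * (B - 1).
    rewrite ler_pM2l //; rewrite /B; lra.
  nra.
have sh0 : 0 < s + h by lra.
set t := h / (s + h).
have ht : t * (s + h) = h by rewrite /t; field; lra.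
have ht' : (1 - t) * (s + h) = s by rewrite mulrBl ht mul1r; ring.
have t01 : 0 <= t <= 1.
  apply/andP; split; first by rewrite /t; apply: divr_ge0; lra.
  by rewrite /t ler_pdivrMr // mul1r; lra.
have Hconv := cf (yy + s *: (v1 - yy)) y' t01.
have E : t *: (yy + s *: (v1 - yy)) + (1 - t) *: y' = yy.
  apply/rowP => k; rewrite /y' !mxE /t; field; lra.
rewrite E in Hconv.
have t0 : 0 <= t by case/andP: t01.
have t1 : 0 <= 1 - t by case/andP: t01 => _; lra.
have H1 : f yy <= t * (gg + s * (v2 - gg)) + (1 - t) * U.
  apply: le_trans Hconv _; apply: lerD; [exact: ler_wpM2l | exact: ler_wpM2l].
have H2 : f yy * (s + h) <= h * (gg + s * (v2 - gg)) + s * U.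
  have := ler_wpM2r (ltW sh0) H1.
  have -> : (t * (gg + s * (v2 - gg)) + (1 - t) * U) * (s + h) =
     (t * (s + h)) * (gg + s * (v2 - gg)) + ((1 - t) * (s + h)) * U by ring.
  by rewrite ht ht'.
have e1 : v2 - gg <= `|v2 - g0| by apply: le_trans (ler_norm _); lra.
have e2 : U - f yy <= `|U - fs| by apply: le_trans (ler_norm _); lra.
have e3 : h * (v2 - gg) <= h * `|v2 - g0| by rewrite ler_pM2l.
have e4 : s * (h * (v2 - gg) + U - f yy) <= s * (h * `|v2 - g0| + `|U - fs| + 1).
  apply: ler_wpM2l => //; lra.
have e5 : h * eps < h * (f yy - gg) by rewrite ltr_pM2l //; lra.
nra.
Qed.

End Conv.

Section Misc.
Variables (R : realType) (n : nat).

Lemma normal_ineq (f : 'rV[R]_n -> R) (v : 'rV[R]_n * R) e a zz :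
  0 < e -> (forall b g, `|v.1 - b| < e -> `|v.2 - g| < e -> f b <= g) ->
  W1 zz (epi f) a -> dotE1 a v - dotE1 a zz <= - (e / 2).
Proof.
move=> e0 Hb [Hn Hw].
have ha := dotE1_unit Hn.
have [_ h2] := unit_entries ha.
have h1 := unit_norm1 ha.
have Hep : epi f (addE1 v (scaleE1 (e / 2) a)).
  rewrite /epi /addE1 /scaleE1 /=; apply: Hb.
    rewrite (_ : v.1 - (v.1 + (e / 2) *: a.1) = - ((e / 2) *: a.1)); last first.
      by apply/rowP => k; rewrite !mxE; ring.
    rewrite normrN normrZ ger0_norm; last lra.
    have : e / 2 * `|a.1| <= e / 2 by rewrite ler_piMr //; lra.
    lra.
  rewrite (_ : v.2 - (v.2 + e / 2 * a.2) = - (e / 2 * a.2)); last by ring.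
  rewrite normrN normrM ger0_norm; last lra.
  have : e / 2 * `|a.2| <= e / 2 by rewrite ler_piMr //; lra.
  lra.
have := Hw _ Hep.
rewrite dotE1B dotE1D dotE1Z ha.
lra.
Qed.

Lemma seg_point (f : 'rV[R]_n -> R) (v : 'rV[R]_n * R) yy gg t qq :
  epi f (addE1 (yy, gg) (scaleE1 qq (subE1 (addE1 v (scaleE1 t (subE1 (yy, gg) v))) (yy, gg)))) ->
  f (yy + (qq * (1 - t)) *: (v.1 - yy)) <= gg + (qq * (1 - t)) * (v.2 - gg).
Proof.
rewrite /epi /addE1 /scaleE1 /subE1 /=.
have -> : yy + qq *: (v.1 + t *: (yy - v.1) - yy) = yy + (qq * (1 - t)) *: (v.1 - yy).
  by apply/rowP => k; rewrite !mxE; ring.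
have -> : gg + qq * (v.2 + t * (gg - v.2) - gg) = gg + (qq * (1 - t)) * (v.2 - gg) by ring.
done.
Qed.

Lemma seg_dot (a v : 'rV[R]_n * R) yy gg t :
  dotE1 a (addE1 v (scaleE1 t (subE1 (yy, gg) v))) =
  dotE1 a v + t * (dotE1 a (yy, gg) - dotE1 a v).
Proof. by rewrite dotE1D dotE1Z dotE1B. Qed.

Lemma bounded_G (S : set 'rV[R]_n) : bounded_setE S -> bounded_set S.
Proof.
move=> [r Hr]; exists r; split; first exact: num_real.
move=> M HM x Sx /=; apply: le_trans (norm_le_sqrt x) _.
apply: le_trans (Hr x Sx) _; exact: ltW.
Qed.

Lemma cluster_seq (T : pseudoMetricType R) (S : set T) (p : nat -> T) :
  compact S -> (forall i, S (p i)) ->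
  exists ps, S ps /\ forall N e, 0 < e -> exists i, (N <= i)%N /\ ball ps e (p i).
Proof.
move=> cS Sp.
have [|ps [Sps Hcl]] := cS (p @ \oo) _ _.
  by exists 0%N => // i _; exact: Sp.
exists ps; split => // N e e0.
have [//| i [[j Hj <-] Hb]] := Hcl (p @` [set j | (N <= j)%N]) (ball ps e) _ (nbhsx_ballx _ _ e0).
  by exists N => // j /= Hj; exists j.
by exists j.
Qed.

End Misc.

Lemma arith_fin (R : realFieldType) (n' t c P Vv Zd PL eta h ep q C qq a b : R) :
 0 < t -> t < 1 -> 0 < c -> 0 <= n' -> 0 < h -> 1 <= q -> 1 <= C -> qq <= q ->
 Zd = Vv + t * (P - Vv) -> Vv - Zd <= - c -> PL - Zd <= 0 ->
 `|P - PL| <= n' * a + b -> a < eta + eta -> b < eta + eta ->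
 h * ep < (qq * (1 - t)) * C -> eta * (4%:R * q * C * (n' + 1)) <= h * ep * c -> False.
Proof.
move=> tp t1 c0 nn h0 q1 C1 qq1 e1 e2 e3 e4 e5 e6 Hg eta2.
have e7 : P - PL < (n' + 1) * (eta + eta).
  apply: le_lt_trans (ler_norm _) _; apply: le_lt_trans e4 _.
  have : n' * a <= n' * (eta + eta) by apply: ler_wpM2l => //; exact: ltW.
  lra.
have e8 : c <= t * (P - Vv) by lra.
have e9 : c <= P - Vv by nra.
have e10 : (1 - t) * c <= P - Zd by nra.
have C0 : 0 < C by lra.
have q0 : 0 < q by lra.
have e11 : h * ep < q * (1 - t) * C.
  apply: lt_le_trans Hg _; rewrite -!mulrA; apply: ler_wpM2r => //.
  apply: mulr_ge0; lra.
have e12 : (4%:R * eta * (n' + 1)) * (q * C) < ((1 - t) * c) * (q * C).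
  have -> : (4%:R * eta * (n' + 1)) * (q * C) = eta * (4%:R * q * C * (n' + 1)) by ring.
  apply: le_lt_trans eta2 _.
  have : h * ep * c < q * (1 - t) * C * c by rewrite ltr_pM2r.
  move=> H; apply: lt_le_trans H _; rewrite le_eqVlt; apply/orP; left; apply/eqP; ring.
rewrite ltr_pM2r in e12; last exact: mulr_gt0.
have : 0 <= eta by nra.
nra.
Qed.

Lemma tri2 (K : numDomainType) (V : normedZmodType K) (a b c : V) (r : K) :
  `|a - b| < r -> `|a - c| < r -> `|b - c| < r + r.
Proof.
move=> h1 h2; apply: le_lt_trans (ler_distD a b c) _.
by rewrite distrC; apply: ltrD.
Qed.
Arguments tri2 {K V a b c r}.
Arguments arith_fin {R n' t c P Vv Zd PL eta h ep q C qq a b}.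

Unset Implicit Arguments. Set Strict Implicit.

Theorem theorem2p2p3 (R : realType) (n m : nat)
  (D : set 'rV[R]_n) (f : 'rV[R]_n -> R) (fstar : R) (xstar : 'rV[R]_n)
  (v : 'I_m -> ('rV[R]_n * R)) (q : R)
  (G : nat -> set 'rV[R]_n) (M Q : nat -> set ('rV[R]_n * R))
  (bgam : nat -> R) (y : nat -> 'rV[R]_n) (gam : nat -> R)
  (eps : nat -> R) (kk : nat -> nat)
  (x : nat -> 'rV[R]_n) (ik : nat -> nat) (sigma : nat -> R)
  (u : nat -> 'rV[R]_n) (z : nat -> 'I_m -> ('rV[R]_n * R))
  (A : nat -> 'I_m -> seq ('rV[R]_n * R)) :
  (0 < m)%N ->
  closed D -> convex_setE D -> convex_funE f ->
  (* f attains its minimum f* on D, and x* in X* *)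
  D xstar -> f xstar = fstar -> (forall x', D x' -> fstar <= f x') ->
  method22_run D f fstar xstar v q G M Q bgam y gam eps kk x ik sigma u z A ->
  (* the method does not terminate *)
  (forall i, f (y i) != gam i) ->
  (* eps_k > 0, eps_k -> 0 *)
  (forall k, 0 < eps k) -> eps @ \oo --> 0 ->
  (* conclusion: x_k, sigma_k defined for all k, and the limits *)
  (forall k : nat, exists i : nat,
      kk i = k /\ f (y i) - gam i <= eps (kk i)) /\
  (fun k => f (x k)) @ \oo --> fstar /\
  sigma @ \oo --> fstar.
Proof.
move=> m0 Dcl Dcv cf Dx fx Hmin Hrun Hnt eps0 Heps.
case: Hrun => [[Hv [[HG0c [HG0cv [HG0b [HG0D HG0x]]]] [[HM0c [HM0cv HM0x]] [Hbg0 [Hq Hkk0]]]]] Hst].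
have Gsub : forall i, G i `<=` G 0.
  case=> [//|i]; by have [_ [_ [_ [_ [_ [_ [_ [_ [_ [H _]]]]]]]]]] := Hst i.
have Gx : forall i, G i xstar.
  case=> [//|i]; by have [_ [_ [_ [_ [_ [_ [_ [_ [_ [_ [H _]]]]]]]]]]] := Hst i.
have bgb : forall i, bgam 0 <= bgam i <= fstar.
  case=> [|i]; first by rewrite lexx Hbg0.
  by have [_ [_ [_ [_ [_ [_ [_ [_ [_ [_ [_ H]]]]]]]]]]] := Hst i.
have Mx : forall i, M i (xstar, fstar).
  elim=> [//|i IH].
  have [_ [[_ [_ HQx]] [_ [_ [_ [H5 [HM1 _]]]]]]] := Hst i.
  rewrite HM1; split => // j a Ha.
  have [_ HA] := H5 j; have [_ Hw] := HA a Ha; apply: Hw.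
  by rewrite /epi /= fx.

have gub : forall i, gam i <= fstar.
  move=> i; have [[_ [_ [_ Hopt]]] _] := Hst i.
  by apply: Hopt; [exact: Gx | exact: Mx | case/andP: (bgb i)].
have glb : forall i, bgam 0 <= gam i.
  move=> i; have [[_ [_ [Hbg _]]] _] := Hst i.
  by case/andP: (bgb i) => H _; apply: le_trans H Hbg.
have fy : forall i, fstar <= f (y i).
  move=> i; have [[Hy _] _] := Hst i; exact/Hmin/HG0D/(Gsub i).
have kkN : forall i, ~~ (f (y i) - gam i <= eps (kk i)) -> kk i.+1 = kk i.
  move=> i Hs; have [_ [_ [Hs2 _]]] := Hst i.
  by have [_ [_ ->]] := Hs2 (negP Hs).
have kkS : forall i, f (y i) - gam i <= eps (kk i) -> kk i.+1 = (kk i).+1.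
  move=> i Hs; have [_ [_ [_ [Hs3 _]]]] := Hst i.
  by have [_ [_ [_ [_ [_ ->]]]]] := Hs3 Hs.
have inf : forall i0, exists i, (i0 <= i)%N /\ f (y i) - gam i <= eps (kk i).
  move=> i0.
  case: (pselect (exists i, (i0 <= i)%N /\ f (y i) - gam i <= eps (kk i))) => // Hno.
  exfalso.
  have Hns : forall i, (i0 <= i)%N -> ~~ (f (y i) - gam i <= eps (kk i)).
    by move=> i Hi; apply/negP => Hs; apply: Hno; exists i.
  have Hkk : forall d, kk (d + i0)%N = kk i0.
    elim=> [//|d IH]; rewrite addSn kkN; first exact: IH. apply: Hns; exact: leq_addl.
  set K := kk i0; set ep := eps K.
  have ep0 : 0 < ep by exact: eps0.
  have Hgi : forall d, gam (d + i0)%N + ep < f (y (d + i0)%N).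
    move=> d; have := Hns (d + i0)%N (leq_addl _ _).
    by rewrite -ltNge Hkk -/K -/ep => H; lra.
  have Mmono : forall d k, M (k + (d + i0).+1)%N `<=` M (d + i0).+1.
    move=> d; elim=> [//|k IH].
    rewrite addSn => w Hw; apply: IH.
    have [_ [_ [Hs2 [_ [_ [_ [HM1 _]]]]]]] := Hst (k + (d + i0).+1)%N.
    have Hle : (i0 <= k + (d + i0).+1)%N by rewrite -addSn addnA leq_addl.
    have [HQM _] := Hs2 (negP (Hns _ Hle)).
    apply: HQM; move: Hw; rewrite HM1; by case.
  pose pts := fun d => (y (d + i0)%N, gam (d + i0)%N).
  have cS : compact (G 0 `*` `[bgam 0, fstar]%classic).
    apply: compact_setX; last exact: segment_compact.
    apply: bounded_closed_compact => //; exact: bounded_G.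
  have Spts : forall d, (G 0 `*` `[bgam 0, fstar]%classic) (pts d).
    move=> d; split => /=.
      have [[Hy _] _] := Hst (d + i0)%N; exact: (Gsub _ _ Hy).
    by rewrite in_itv /= glb gub.
  have [ps [Sps Hcl]] := cluster_seq cS Spts.
  pose j0 := Ordinal m0.
  pose v0 := v j0.
  have [e e0 Hball] : nbhs_ball v0 (epi f) by apply/nbhs_ballP; exact: Hv.
  have {}e0 : 0 < e := e0.
  have HB : forall b g, `|v0.1 - b| < e -> `|v0.2 - g| < e -> f b <= g.
    move=> b g h1 h2; apply: (Hball (b, g)); split => /=; rewrite -ball_normE //.
  pose rho := e / 2.
  have rho0 : 0 < rho by rewrite /rho; lra.
  pose U := (f (2%:R *: ps.1 - v0.1) + v0.2) / 2%:R.
  have Hub : forall w, `|ps.1 - w| < rho -> f w <= U.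
    apply: local_ub => //.
    move=> b hb; apply: HB => //; rewrite subrr normr0 //.
  pose h := rho / (2%:R * (`|v0.1 - ps.1| + rho + 1)).
  have h0 : 0 < h.
    have := normr_ge0 (v0.1 - ps.1) => nn.
    rewrite /h; apply: divr_gt0 => //; lra.
  pose C := h * `|v0.2 - bgam 0| + `|U - fstar| + 1.
  have C1 : 1 <= C.
    have := normr_ge0 (v0.2 - bgam 0); have := normr_ge0 (U - fstar).
    rewrite /C => a1 a2; have : 0 <= h * `|v0.2 - bgam 0| by apply: mulr_ge0 => //; exact: ltW.
    lra.
  pose c := e / 2.
  have c0 : 0 < c by rewrite /c; lra.
  pose W := 4%:R * q * C * (n%:R + 1).
  have W0 : 0 < W.
    rewrite /W; have : (0:R) <= n%:R by exact: ler0n.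
    move=> nn; apply: mulr_gt0; last lra.
    apply: mulr_gt0; last lra.
    apply: mulr_gt0; lra.
  pose eta := Num.min (rho / 2%:R) (h * ep * c / W).
  have eta0 : 0 < eta.
    rewrite /eta lt_min; apply/andP; split; first lra.
    apply: divr_gt0 => //; apply: mulr_gt0 => //; exact: mulr_gt0.
  have eta1 : eta <= rho / 2%:R by rewrite /eta ge_min lexx.
  have eta2 : eta * W <= h * ep * c by rewrite -ler_pdivlMr // /eta ge_min lexx orbT.
  have [d1 [_ Hb1]] := Hcl 0%N eta eta0.
  have [d2 [Hd12 Hb2]] := Hcl d1.+1 eta eta0.
  case: Hb1 => /= Hb1y Hb1g.
  case: Hb2 => /= Hb2y Hb2g.
  rewrite -ball_normE /= in Hb1y Hb1g Hb2y Hb2g.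
  set I := (d1 + i0)%N in Hb1y Hb1g.
  set L := (d2 + i0)%N in Hb2y Hb2g.
  have [_ [_ [Hs2 [_ [H4 [H5 [HM1 _]]]]]]] := Hst I.
  have [_ [Hu _]] := Hs2 (negP (Hns I (leq_addl _ _))).
  have [[t [t01 Hz]] [_ [qq [Hqq Hepi]]]] := H4 j0.
  rewrite Hu in Hz Hepi.
  rewrite Hz in Hepi.
  have [Hne HA] := H5 j0.
  case EA : (A I j0) Hne => [//|a sa] _.
  have Ha : a \in A I j0 by rewrite EA mem_head.
  have HW := HA a Ha.
  have ha := dotE1_unit HW.1.
  have Hnorm := normal_ineq e0 HB HW.
  have Hgap := @gap R n f cf v0.1 v0.2 rho U 0 ps.1 (bgam 0) fstar rho0 Hub (y I) (gam I) (qq * (1 - t)) ep.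
  case/andP: t01 => tp t1.
  have Hsp := seg_point Hepi.
  have s0 : 0 <= qq * (1 - t).
    case/andP: Hqq => q1 _; apply: mulr_ge0.
      exact: le_trans ler01 q1.
    by rewrite subr_ge0 ltW.
  have Hg : h * ep < (qq * (1 - t)) * C.
    exact: (Hgap (lt_le_trans Hb1y eta1) s0 Hsp (Hgi d1) (glb I) (fy I)).
  have Lge : L = ((d2 - d1.+1) + (d1 + i0).+1)%N by rewrite /L -addSn addnA subnK.
  have [[_ [HML _]] _] := Hst L.
  have := Mmono d1 (d2 - d1.+1)%N _ (eq_ind _ (fun k => M k (y L, gam L)) HML _ Lge).
  rewrite -/I HM1 => -[_ Hcut].
  have e3 := Hcut j0 a Ha.
  rewrite dotE1B in e3.
  have e1 : dotE1 a (z I j0) = dotE1 a v0 + t * (dotE1 a (y I, gam I) - dotE1 a v0).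
    by rewrite Hz seg_dot.
  have e2 := Hnorm; rewrite -/c in e2.
  have e4 : `|dotE1 a (y I, gam I) - dotE1 a (y L, gam L)| <=
      n%:R * `|y I - y L| + `|gam I - gam L|.
    by rewrite -dotE1B; exact: (dotE1_bound _ ha).
  have e5 := tri2 Hb1y Hb2y.
  have e6 := tri2 Hb1g Hb2g.
  have nn : (0:R) <= n%:R by exact: ler0n.
  exact: (arith_fin tp t1 c0 nn h0 Hq C1 (proj2 (andP Hqq)) e1 e2 e3 e4 e5 e6 Hg eta2).
have stepk : forall i, exists j, kk j = kk i /\ f (y j) - gam j <= eps (kk j).
  move=> i.
  have [j [Hij Hj]] := inf i.
  have : exists j1, (i <= j1 <= (j - i) + i)%N /\ f (y j1) - gam j1 <= eps (kk j1).
    by exists j; rewrite subnK // leqnn Hij.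
  move: (j - i)%N => dd; elim: dd i {Hij} => [|dd IH] i0 [j0 [Hj0 Hs]].
    move: Hj0; rewrite add0n => Hj0.
    have E : j0 = i0 by apply/eqP; rewrite eqn_leq andbC.
    by exists j0; rewrite E; split => //; rewrite -E.
  case Hs0 : (f (y i0) - gam i0 <= eps (kk i0)); first by exists i0.
  have Hk := kkN i0 (negbT Hs0).
  have [|j1 [Hj1 Hs1]] := IH i0.+1.
    exists j0; split => //.
    case/andP: Hj0 => h1 h2; apply/andP; split; last by rewrite addnS -addSn.
    rewrite ltn_neqAle h1 andbT; apply/eqP => E; subst j0.
    by rewrite Hs in Hs0.
  by exists j1; split => //; rewrite Hj1 Hk.
have allk : forall k, exists i, kk i = k.
  elim=> [|k [i Hi]]; first by exists 0%N.
  have [j [Hj Hs]] := stepk i.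
  by exists j.+1; rewrite kkS // Hj Hi.
have Hex : forall k, exists i, kk i = k /\ f (y i) - gam i <= eps (kk i).
  move=> k; have [i Hi] := allk k; have [j [Hj Hs]] := stepk i.
  by exists j; rewrite Hj Hi; split => //; rewrite -Hi -Hj.
have bnds : forall k, fstar <= f (x k) <= fstar + eps k /\ fstar - eps k <= sigma k <= fstar.
  move=> k; have [i [Hi Hs]] := Hex k.
  have [_ [_ [_ [Hs3 _]]]] := Hst i.
  have [HG [Hfx [_ [Hsig _]]]] := Hs3 Hs.
  rewrite Hi in HG Hfx Hsig Hs.
  have f1 : fstar <= f (x k) by exact/Hmin/HG0D/(Gsub i).
  have g1 := gub i.
  rewrite Hsig; split; apply/andP; split => //; lra.
split => //.
have cE : (fun k => fstar + eps k) @ \oo --> fstar.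
  rewrite -[X in _ --> X]addr0; apply: cvgD => //; exact: cvg_cst.
have cE' : (fun k => fstar - eps k) @ \oo --> fstar.
  rewrite -[X in _ --> X]subr0; apply: cvgB => //; exact: cvg_cst.
split.
  apply: (@squeeze_cvgr _ _ _ _ (fun=> fstar) (fun k => fstar + eps k)) => //.
    by apply: nearW => k; have [] := bnds k.
  exact: cvg_cst.
apply: (@squeeze_cvgr _ _ _ _ (fun k => fstar - eps k) (fun=> fstar)) => //.
  by apply: nearW => k; have [] := bnds k.
exact: cvg_cst.
Qed.
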